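(* Let $\bm{C}\in\mathbb{R}_+^{n\times m}$ be a cost matrix with nonnegative entries, let $\bm{a}\in\mathbb{R}_+^n$, let $\bm{b}\in\mathbb{R}_+^m$ be a positive measure with total mass $c_{\bm{b}}=\sum_{j=1}^m\bm{b}_j$, let $\tau>0$, and let $r$ be an integer with $2\le r\le\min\{n,m\}$. Let $\mathrm{SR}\text{-}\mathrm{W}^\star(\mu_{\bm{b}})$ be the optimal value of the semi-relaxed problem $\min\{\langle\bm{C},\bm{P}\rangle_F+\tau\,\mathrm{KL}(\bm{P}\bm{1}_m\|\bm{a}):\bm{P}\in\mathbb{R}_+^{n\times m},\ \bm{P}^{\mathrm T}\bm{1}_n=\bm{b}\}$ and $\mathrm{SR}\text{-}\mathrm{W}^\star_r(\mu_{\bm{b}})$ the optimal value of the same problem with the additional constraint $\mathrm{rk}_+(\bm{P})\le r$. Then $$\big|\mathrm{SR}\text{-}\mathrm{W}^\star_r(\mu_{\bm{b}})-\mathrm{SR}\text{-}\mathrm{W}^\star(\mu_{\bm{b}})\big|\le c_{\bm{b}}\Big(\max_{p,q}\bm{C}_{pq}-\min_{p,q}\bm{C}_{pq}\Big)\ln\!\big(\min\{n,m\}/(r-1)\big).$$ In particular, for probability vectors $\bm{a}\in\Delta_n$, $\bm{b}\in\Delta_m$, letting $\mathrm{W}^\star(\mu_{\bm{a}},\mu_{\bm{b}})=\min_{\bm{P}\in\Pi_{\bm{a},\bm{b}}}\langle\bm{C},\bm{P}\rangle_F$ and $\mathrm{W}^\star_r(\mu_{\bm{a}},\mu_{\bm{b}})=\min_{\bm{P}\in\Pi_{\bm{a},\bm{b}},\,\mathrm{rk}_+(\bm{P})\le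 r}\langle\bm{C},\bm{P}\rangle_F$, one has $$\big|\mathrm{W}^\star_r(\mu_{\bm{a}},\mu_{\bm{b}})-\mathrm{W}^\star(\mu_{\bm{a}},\mu_{\bm{b}})\big|\le\Big(\max_{p,q}\bm{C}_{pq}-\min_{p,q}\bm{C}_{pq}\Big)\ln\!\big(\min\{n,m\}/(r-1)\big).$$
   Context: The nonnegative rank $\mathrm{rk}_+(\bm{M})$ of a nonnegative matrix is the least number of nonnegative rank-one matrices summing to $\bm{M}$. $\Pi_{\bm{a},\bm{b}}=\{\bm{P}\in\mathbb{R}_+^{n\times m}:\bm{P}\bm{1}_m=\bm{a},\ \bm{P}^{\mathrm T}\bm{1}_n=\bm{b}\}$. $\mathrm{KL}$ is the (generalized) Kullback–Leibler divergence. $\Delta_d$ is the probability simplex in $\mathbb{R}^d$. *)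

(* Defs.v *)
From HB Require Import structures.
From mathcomp Require Import all_boot all_order all_algebra.
From mathcomp Require Import all_classical all_reals all_analysis.
Set Implicit Arguments. Unset Strict Implicit. Unset Printing Implicit Defensive.
Import Order.TTheory GRing.Theory Num.Theory.
Local Open Scope classical_set_scope.
Local Open Scope ring_scope.

Section OTDefs.
Variable R : realType.

Definition mx_nonneg n m (P : 'M[R]_(n, m)) : Prop := forall i j, 0 <= P i j.

(* rk_+(P) <= r : P is a sum of at most r nonnegative rank-one matrices
   (k = 0 allowed: the empty sum, for P = 0). *)
Definition nnrank_le n m (P : 'M[R]_(n, m)) (r : nat) : Prop :=
  exists k : nat, (k <= r)%N /\
    exists M : 'I_k -> 'M[R]_(n, m),
      (forall l, mx_nonneg (M l) /\ \rank (M l) = 1%N) /\ P = \sum_(l < k) M l.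

Definition rowsum n m (P : 'M[R]_(n, m)) (i : 'I_n) : R := \sum_(j < m) P i j.
Definition colsum n m (P : 'M[R]_(n, m)) (j : 'I_m) : R := \sum_(i < n) P i j.

Definition frob n m (C P : 'M[R]_(n, m)) : R := \sum_(i < n) \sum_(j < m) C i j * P i j.

(* generalized KL term x ln(x/y) - x + y, with 0 ln 0 = 0 and
   value +oo when y = 0 < x *)
Definition klterm (x y : R) : \bar R :=
  if y == 0 then (if x == 0 then 0%E else +oo%E)
  else (x * ln (x / y) - x + y)%:E.

Definition KL n (x y : 'I_n -> R) : \bar R := (\sum_(i < n) klterm (x i) (y i))%E.

Definition SRobj n m (C : 'M[R]_(n, m)) (a : 'I_n -> R) (tau : R) (P : 'M[R]_(n, m))
  : \bar R := ((frob C P)%:E + tau%:E * KL (rowsum P) a)%E.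

Definition SRW n m (C : 'M[R]_(n, m)) (a : 'I_n -> R) (b : 'I_m -> R) (tau : R) : \bar R :=
  ereal_inf [set SRobj C a tau P | P in
              [set P : 'M[R]_(n, m) | mx_nonneg P /\ forall j, colsum P j = b j]].

Definition SRW_r n m (C : 'M[R]_(n, m)) (a : 'I_n -> R) (b : 'I_m -> R) (tau : R)
  (r : nat) : \bar R :=
  ereal_inf [set SRobj C a tau P | P in
              [set P : 'M[R]_(n, m) | mx_nonneg P /\ (forall j, colsum P j = b j)
                                      /\ nnrank_le P r]].

Definition Pi_ab n m (a : 'I_n -> R) (b : 'I_m -> R) : set 'M[R]_(n, m) :=
  [set P | mx_nonneg P /\ (forall i, rowsum P i = a i) /\ (forall j, colsum P j = b j)].

Definition W n m (C : 'M[R]_(n, m)) (a : 'I_n -> R) (b : 'I_m -> R) : \bar R :=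
  ereal_inf [set (frob C P)%:E | P in Pi_ab a b].

Definition W_r n m (C : 'M[R]_(n, m)) (a : 'I_n -> R) (b : 'I_m -> R) (r : nat) : \bar R :=
  ereal_inf [set (frob C P)%:E | P in [set P | Pi_ab a b P /\ nnrank_le P r]].

(* max_{p,q} C_pq (valid for nonnegative C, n, m >= 1) and min_{p,q} C_pq
   (valid for n, m >= 1) *)
Definition mxmax n m (C : 'M[R]_(n, m)) : R :=
  \big[Num.max/0]_(pq : 'I_n * 'I_m) C pq.1 pq.2.
Definition mxmin n m (C : 'M[R]_(n, m)) : R :=
  \big[Num.min/mxmax C]_(pq : 'I_n * 'I_m) C pq.1 pq.2.

Definition in_simplex d (x : 'I_d -> R) : Prop :=
  (forall i, 0 <= x i) /\ \sum_(i < d) x i = 1.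

End OTDefs.

(* Main.v *)
Require Import Defs.
From HB Require Import structures.
From mathcomp Require Import all_boot all_order all_algebra.
From mathcomp Require Import all_classical all_reals all_analysis.
From mathcomp Require Import ring lra.
Import Order.TTheory GRing.Theory Num.Theory.
Local Open Scope ring_scope.
Section Aux.
Variable R : realType.

Lemma greedy n (x : 'I_n -> R) k : (k <= n)%N ->
  exists W : {set 'I_n}, #|W| = k /\ forall i j, i \in W -> j \notin W -> x j <= x i.
Proof.
elim: k => [|k IH] hk.
  by exists finset.set0; split; [rewrite cards0 | move=> i j; rewrite inE].
have [W [cW HW]] := IH (ltnW hk).
have cC : #|~: W| = (n - k)%N by rewrite -[#|~: W|](addKn #|W|) cardsC card_ord cW.
have : (0 < #|~: W|)%N by rewrite cC subn_gt0.
case/card_gt0P => j0 j0W.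
set jm := [arg max_(j > j0 in ~: W) x j]%O.
case: (arg_maxP x j0W) => jm' jmW jmax.
exists (jm' |: W); split.
  have jW : jm' \in ~: W := jmW.
  by rewrite finset.in_setC in jW; rewrite cardsU1 jW cW.
move=> i j; rewrite !finset.in_setU1 => /orP[/eqP -> | iW]; rewrite negb_or => /andP[jn jW].
  by apply: jmax; have : j \in ~: W by rewrite finset.in_setC.
exact: HW.
Qed.

Lemma topmass n (x : 'I_n -> R) k : (k <= n)%N ->
  exists W : {set 'I_n}, #|W| = k /\
    k%:R * \sum_i x i <= n%:R * \sum_(i in W) x i.
Proof.
move=> hk; have [W [cW HW]] := greedy _ x _ hk.
exists W; split => //.
have key : \sum_(i in W) \sum_(j in ~: W) x j <= \sum_(i in W) \sum_(j in ~: W) x i.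
  apply: ler_sum => i iW; apply: ler_sum => j; rewrite finset.in_setC => jW; exact: HW.
have cC : #|~: W| = (n - k)%N by rewrite -[#|~: W|](addKn #|W|) cardsC card_ord cW.
have e1 : \sum_(i in W) \sum_(j in ~: W) x j = k%:R * \sum_(j in ~: W) x j.
  by rewrite sumr_const cW mulr_natl.
have e2 : \sum_(i in W) \sum_(j in ~: W) x i = (n - k)%:R * \sum_(i in W) x i.
  by rewrite exchange_big /= sumr_const cC mulr_natl.
rewrite e1 e2 in key.
rewrite (bigID (fun i => i \in W)) /=.
have -> : \sum_(i | i \notin W) x i = \sum_(i in ~: W) x i.
  by apply: eq_bigl => i; rewrite finset.in_setC.
rewrite natrB // in key.
move: key; set So := \sum_(i in ~: W) _; set Si := \sum_(i in W) _.
move=> key; rewrite mulrDr; rewrite mulrBl in key; lra.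
Qed.
End Aux.
Section Aux2.
Variable R : realType.

Lemma rank_le1 n m (M : 'M[R]_(n, m)) (u : 'I_n -> R) (v : 'I_m -> R) :
  (forall i j, M i j = u i * v j) -> (\rank M <= 1)%N.
Proof.
move=> HM.
have -> : M = (\col_i u i) *m (\row_j v j).
  apply/matrixP => i j; rewrite HM !mxE big_ord1 !mxE //.
apply: leq_trans (mxrankM_maxl _ _) _; exact: rank_leq_col.
Qed.

Lemma nnrank_seq n m (s : seq 'M[R]_(n, m)) r :
  (forall M, M \in s -> mx_nonneg M /\ (\rank M <= 1)%N) -> (size s <= r)%N ->
  nnrank_le (\sum_(M <- s) M) r.
Proof.
elim: s r => [|M s IH] r Hs hr.
  exists 0%N; split => //; exists (fun _ => 0); split; first by case.
  by rewrite big_nil big_ord0.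
case: r hr => [//|r] /= hr.
rewrite big_cons.
have [k [hk [F [HF ->]]]] := IH r (fun N hN => Hs N (mem_behead (s := M :: s) hN)) hr.
have [nnM rkM] := Hs M (mem_head _ _).
case: (eqVneq M 0) => [->|Mn0].
  rewrite add0r; exists k; split; first exact: leqW.
  by exists F.
exists k.+1; split => //.
exists (fun l => if unlift ord0 l is Some i then F i else M); split.
  move=> l; case: (unliftP ord0 l) => [i _|_] //; split => //.
  apply/eqP; rewrite eqn_leq rkM lt0n mxrank_eq0 //.
rewrite big_ord_recl unlift_none; congr (_ + _).
by apply: eq_bigr => i _; rewrite liftK.
Qed.
End Aux2.
Section Core.
Variable R : realType.

Lemma bigIDC n (W : {set 'I_n}) (F : 'I_n -> R) :
  \sum_i F i = \sum_(i in W) F i + \sum_(i in ~: W) F i.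
Proof.
rewrite (bigID (fun i => i \in W)) /=; congr (_ + _).
by apply: eq_bigl => i; rewrite finset.in_setC.
Qed.

Lemma core n m (C P : 'M[R]_(n, m)) r lo hi :
  mx_nonneg P -> (forall i j, lo <= C i j <= hi) -> lo <= hi ->
  (1 <= r)%N -> (r <= n)%N ->
  exists Q : 'M[R]_(n, m), mx_nonneg Q /\ (forall i, rowsum Q i = rowsum P i) /\
    (forall j, colsum Q j = colsum P j) /\ nnrank_le Q r /\
    n%:R * frob C Q <= n%:R * frob C P
                       + (hi - lo) * (n%:R - (r.-1)%:R) * \sum_i rowsum P i.
Proof.
move=> P0 HC lohi r1 rn.
set x := rowsum P.
have x0 : forall i, 0 <= x i by move=> i; apply: sumr_ge0 => j _; exact: P0.
have [W [cW HW]] := @topmass R n x _ (leq_trans (leq_pred r) rn).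
set s := \sum_(i in ~: W) x i.
set c := fun j => \sum_(i in ~: W) P i j.
have s0 : 0 <= s by apply: sumr_ge0 => i _.
have c0 : forall j, 0 <= c j by move=> j; apply: sumr_ge0 => i _.
have sc : \sum_j c j = s by rewrite /c exchange_big.
have xs : forall i, i \in ~: W -> x i <= s.
  move=> i iW; rewrite /s (bigD1 i) //= lerDl; apply: sumr_ge0 => ? _; exact: x0.
have cs : forall j, c j <= s.
  move=> j; rewrite -sc (bigD1 j) //= lerDl; apply: sumr_ge0 => ? _; exact: c0.
set L := \matrix_(i < n, j < m) (if i \in W then 0 else x i * c j / s).
set piece := fun i0 : 'I_n => \matrix_(i < n, j < m) (if i == i0 then P i0 j else 0).
set Q := \sum_(M <- [seq piece i | i <- enum W] ++ [:: L]) M.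
have QE : forall i j, Q i j = if i \in W then P i j else L i j.
  move=> i j; rewrite /Q summxE big_cat big_map big_enum big_seq1 /=.
  have -> : \sum_(k in W) piece k i j = if i \in W then P i j else 0.
    case: ifP => iW.
      rewrite (bigD1 i) //= big1 ?addr0; first by rewrite /piece mxE eqxx.
      by move=> k /andP[_ ki]; rewrite /piece mxE eq_sym (negbTE ki).
    apply: big1 => k kW; rewrite /piece mxE; case: eqP => // ik.
    by rewrite ik kW in iW.
  by rewrite /L mxE; case: ifP => _; rewrite ?add0r ?addr0.
have notW : forall i, i \in ~: W -> (i \in W) = false.
  by move=> i; rewrite finset.in_setC => /negbTE.
have Lrow : forall i, i \in ~: W -> \sum_j L i j = x i.
  move=> i iW; under eq_bigr => j _ do rewrite mxE (notW _ iW).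
  case: (eqVneq s 0) => [s0'|sn0].
    rewrite big1 => [|j _]; last by rewrite s0' invr0 mulr0.
    by apply: le_anti; rewrite x0 -s0' xs.
  by rewrite -mulr_suml -mulr_sumr sc mulfK.
have Lcol : forall j, \sum_(i in ~: W) L i j = c j.
  move=> j; under eq_bigr => i iW do rewrite mxE (notW _ iW).
  case: (eqVneq s 0) => [s0'|sn0].
    rewrite big1 => [|i _]; last by rewrite s0' invr0 mulr0.
    by apply: le_anti; rewrite c0 -s0' cs.
  rewrite -!mulr_suml -/s; field; exact: sn0.
have L0 : mx_nonneg L.
  move=> i j; rewrite mxE; case: ifP => // _.
  by apply: divr_ge0 => //; apply: mulr_ge0.
have Qrow : forall i, rowsum Q i = x i.
  move=> i; case: (boolP (i \in W)) => iW.
    by rewrite /rowsum; apply: eq_bigr => j _; rewrite QE iW.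
  have iW' : i \in ~: W by rewrite finset.in_setC.
  rewrite -(Lrow _ iW') /rowsum; apply: eq_bigr => j _; by rewrite QE (notW _ iW').
have Q0 : mx_nonneg Q by move=> i j; rewrite QE; case: ifP.
exists Q; split; first exact: Q0.
split; first exact: Qrow.
split.
  move=> j; rewrite /colsum (bigIDC _ W) [in RHS](bigIDC _ W); congr (_ + _).
    by apply: eq_bigr => i iW; rewrite QE iW.
  rewrite -/(c j) -Lcol; apply: eq_bigr => i iW; by rewrite QE (notW _ iW).
split.
  apply: nnrank_seq.
    move=> M; rewrite mem_cat => /orP[/mapP[i _ ->]|].
      split; first by move=> k j; rewrite /piece mxE; case: eqP.
      apply: (@rank_le1 R n m _ (fun k => (k == i)%:R) (fun j => P i j)).
      by move=> k j; rewrite /piece mxE; case: eqP => _; rewrite ?mul1r ?mul0r.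
    rewrite mem_seq1 => /eqP ->; split => //.
    apply: (@rank_le1 R n m _ (fun k => if k \in W then 0 else x k / s) c).
    by move=> k j; rewrite mxE; case: ifP => _; rewrite ?mul0r // mulrAC.
  by rewrite size_cat size_map -cardE cW /= addn1 prednK.
have eW : \sum_(i in W) \sum_j C i j * Q i j = \sum_(i in W) \sum_j C i j * P i j.
  by apply: eq_bigr => i iW; apply: eq_bigr => j _; rewrite QE iW.
have eNW : \sum_(i in ~: W) \sum_j C i j * Q i j <=
           \sum_(i in ~: W) \sum_j C i j * P i j + (hi - lo) * s.
  rewrite /s mulr_sumr -big_split /=; apply: ler_sum => i iW.
  have h1 : \sum_j C i j * Q i j <= hi * x i.
    rewrite -(Qrow i) /rowsum mulr_sumr; apply: ler_sum => j _.
    by apply: ler_wpM2r; [exact: Q0 | case/andP: (HC i j)].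
  have h2 : lo * x i <= \sum_j C i j * P i j.
    rewrite /x /rowsum mulr_sumr; apply: ler_sum => j _.
    by apply: ler_wpM2r; [exact: P0 | case/andP: (HC i j)].
  lra.
have cost : frob C Q <= frob C P + (hi - lo) * s.
  rewrite /frob (bigIDC _ W) eW (bigIDC _ W (fun i => \sum_j C i j * P i j)).
  lra.
have eT : \sum_i rowsum P i = \sum_(i in W) x i + s by rewrite (bigIDC _ W).
rewrite eT; rewrite eT in HW.
move: HW cost; set Sin := \sum_(i in W) x i; set fQ := frob C Q; set fP := frob C P.
move=> HW cost.
have hl : 0 <= hi - lo by lra.
have nn : 0 <= (n%:R : R) by [].
have h3 : 0 <= n%:R * Sin - r.-1%:R * (Sin + s) by rewrite subr_ge0.
have := mulr_ge0 hl h3.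
have := ler_wpM2l nn cost.
nra.
Qed.
End Core.
Section Core2.
Variable R : realType.

Lemma nnrank_tr n m (Q : 'M[R]_(n, m)) r : nnrank_le Q r -> nnrank_le Q^T r.
Proof.
move=> [k [hk [F [HF ->]]]]; exists k; split => //.
exists (fun l => (F l)^T); split.
  move=> l; have [h1 h2] := HF l; split; last by rewrite mxrank_tr.
  by move=> i j; rewrite mxE.
apply/matrixP => i j; rewrite !mxE !summxE; apply: eq_bigr => l _; by rewrite mxE.
Qed.

Lemma core2 n m (C P : 'M[R]_(n, m)) r lo hi :
  mx_nonneg P -> (forall i j, lo <= C i j <= hi) -> lo <= hi ->
  (1 <= r)%N -> (r <= minn n m)%N ->
  exists Q : 'M[R]_(n, m), mx_nonneg Q /\ (forall i, rowsum Q i = rowsum P i) /\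
    (forall j, colsum Q j = colsum P j) /\ nnrank_le Q r /\
    (minn n m)%:R * frob C Q <= (minn n m)%:R * frob C P
                       + (hi - lo) * ((minn n m)%:R - (r.-1)%:R) * \sum_i rowsum P i.
Proof.
move=> P0 HC lohi r1.
case: (leqP n m) => nm rm.
  exact: core.
have PT0 : mx_nonneg P^T by move=> i j; rewrite mxE.
have HCT : forall i j, lo <= C^T i j <= hi by move=> i j; rewrite mxE.
have [Q' [Q0 [Qr [Qc [Qk Qf]]]]] := @core R m n C^T P^T r lo hi PT0 HCT lohi r1 rm.
exists Q'^T; split; first by move=> i j; rewrite mxE.
split.
  move=> i; rewrite -[RHS](_ : colsum P^T i = _); last first.
    by rewrite /colsum /rowsum; apply: eq_bigr => j _; rewrite mxE.
  rewrite -Qc /colsum /rowsum; apply: eq_bigr => j _; by rewrite mxE.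
split.
  move=> j; rewrite -[RHS](_ : rowsum P^T j = _); last first.
    by rewrite /colsum /rowsum; apply: eq_bigr => i _; rewrite mxE.
  rewrite -Qr /colsum /rowsum; apply: eq_bigr => i _; by rewrite mxE.
split; first exact: nnrank_tr.
have e1 : forall A B : 'M[R]_(n, m), frob A B = frob A^T B^T.
  move=> A B; rewrite /frob exchange_big; apply: eq_bigr => j _.
  by apply: eq_bigr => i _; rewrite !mxE.
have e2 : \sum_i rowsum P i = \sum_i rowsum P^T i.
  rewrite /rowsum exchange_big; apply: eq_bigr => j _.
  by apply: eq_bigr => i _; rewrite !mxE.
rewrite e1 e2 (e1 C P).
have -> : Q'^T^T = Q' by rewrite trmxK.
exact: Qf.
Qed.
End Core2.
Section Gap.
Variable R : realType.

Lemma final_gap (T : Type) (A Ar : set T) (f : T -> \bar R) (B : R) :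
  (forall P, Ar P -> A P) -> (forall P, A P -> (0 <= f P)%E) ->
  (exists P, A P /\ (f P < +oo)%E) ->
  (forall P, A P -> exists Q, Ar Q /\ (f Q <= f P + B%:E)%E) ->
  (`| ereal_inf [set f P | P in Ar] - ereal_inf [set f P | P in A] | <= B%:E)%E.
Proof.
move=> sub f0 [P0 [AP0 fin0]] H.
have y0 : (0 <= ereal_inf [set f P | P in A])%E.
  by apply/ereal_infP => z [P AP <-]; exact: f0.
have yx : (ereal_inf [set f P | P in A] <= ereal_inf [set f P | P in Ar])%E.
  apply/ereal_infP => z [Q ArQ <-]; apply: ereal_inf_lbound; exists Q => //; exact: sub.
have xB : forall P, A P -> (ereal_inf [set f P | P in Ar] <= f P + B%:E)%E.
  move=> P AP; have [Q [ArQ hQ]] := H P AP.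
  apply: le_trans hQ; apply: ereal_inf_lbound; by exists Q.
set x := ereal_inf [set f P | P in Ar] in yx xB *.
set y := ereal_inf [set f P | P in A] in yx y0 *.
have xBy : (x - B%:E <= y)%E.
  apply/ereal_infP => z [P AP <-]; rewrite leeBlDr //; exact: xB.
have xB0 := xB P0 AP0.
move: yx y0 xB0 xBy; clear xB.
case: x => [xr| |]; case: y => [yr| |] //=; last first.
- move=> _ _; move: fin0; case: (f P0) => [r| |] //= _.
move=> yx y0 _ xBy; rewrite -EFinD in xBy.
move: yx xBy; rewrite !lee_fin => yx xBy.
rewrite ger0_norm ?subr_ge0 //; lra.
Qed.
End Gap.
Section Fin.
Variable R : realType.

Lemma ln_le_sub1 (t : R) : 0 < t -> ln t <= t - 1.
Proof.
move=> t0; have := @le_ln1Dx R (t - 1); rewrite addrCA subrr addr0; apply; lra.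
Qed.

Lemma lnb (N k : nat) : (0 < k)%N -> (k <= N)%N ->
  1 - k%:R / N%:R <= ln (N%:R / k%:R : R).
Proof.
move=> k0 kN.
have kp : 0 < (k%:R : R) by rewrite ltr0n.
have Np : 0 < (N%:R : R) by rewrite ltr0n; exact: leq_trans kN.
have yp : 0 < k%:R / N%:R :> R by exact: divr_gt0.
rewrite -[X in ln X](invf_div (k%:R : R) N%:R) lnV; last by rewrite posrE.
have := ln_le_sub1 _ yp; lra.
Qed.

Lemma mx_bounds n m (C : 'M[R]_(n, m)) i j : mxmin C <= C i j <= mxmax C.
Proof.
apply/andP; split.
  exact: (bigmin_le _ (i, j) (fun pq => C pq.1 pq.2)).
exact: (le_bigmax _ (fun pq => C pq.1 pq.2) (i, j)).
Qed.

Lemma core3 n m (C P : 'M[R]_(n, m)) r lo hi :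
  mx_nonneg P -> (forall i j, lo <= C i j <= hi) -> lo <= hi ->
  (2 <= r)%N -> (r <= minn n m)%N ->
  exists Q : 'M[R]_(n, m), mx_nonneg Q /\ (forall i, rowsum Q i = rowsum P i) /\
    (forall j, colsum Q j = colsum P j) /\ nnrank_le Q r /\
    frob C Q <= frob C P + (\sum_i rowsum P i) * (hi - lo)
                            * ln ((minn n m)%:R / (r.-1)%:R).
Proof.
move=> P0 HC lohi r2 rN.
have [Q [Q0 [Qr [Qc [Qk Qf]]]]] := @core2 R n m C P r lo hi P0 HC lohi (ltnW r2) rN.
exists Q; do 4! (split => //).
have k0 : (0 < r.-1)%N by rewrite -ltnS prednK // ltnW.
have kN : (r.-1 <= minn n m)%N by apply: leq_trans rN; exact: leq_pred.
have := lnb _ _ k0 kN.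
have T0 : 0 <= \sum_i rowsum P i.
  by apply: sumr_ge0 => i _; apply: sumr_ge0 => j _; exact: P0.
have Np : 0 < ((minn n m)%:R : R) by rewrite ltr0n; apply: leq_trans kN.
move: Qf; set N := ((minn n m)%:R : R); set k := ((r.-1)%:R : R).
set T := \sum_i rowsum P i; set fQ := frob C Q; set fP := frob C P.
set l := ln (N / k) => Qf hl.
have e : N - k = N * (1 - k / N) by field; lra.
rewrite e in Qf.
have h1 : fQ <= fP + (hi - lo) * (1 - k / N) * T.
  rewrite -(ler_pM2l Np).
  have -> : N * (fP + (hi - lo) * (1 - k / N) * T) =
            N * fP + (hi - lo) * (N * (1 - k / N)) * T by ring.
  exact: Qf.
have h2 : (hi - lo) * (1 - k / N) * T <= T * (hi - lo) * l.
  rewrite [X in _ <= X]mulrAC [X in _ <= X]mulrC mulrA.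
  rewrite [X in _ <= X]mulrAC.
  apply: ler_wpM2r => //; apply: ler_wpM2l => //; lra.
lra.
Qed.
End Fin.
Arguments mx_bounds {R n m}.
Arguments core3 {R n m C P r lo hi}.
Arguments final_gap {R T A Ar f B}.
Section KLs.
Variable R : realType.

Lemma klterm_ge0 (x y : R) : 0 <= x -> 0 <= y -> (0 <= klterm x y)%E.
Proof.
move=> x0 y0; rewrite /klterm; case: eqP => [_|yn0].
  by case: eqP => _; rewrite ?leey.
rewrite lee_fin.
have yp : 0 < y by rewrite lt_neqAle eq_sym; apply/andP; split => //; apply/eqP.
case: (eqVneq x 0) => [->|xn0]; first by rewrite mul0r; lra.
have xp : 0 < x by rewrite lt_neqAle eq_sym xn0.
have := @ln_le_sub1 R _ (divr_gt0 yp xp).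
rewrite -[X in ln X](invf_div x y) lnV; last by rewrite posrE divr_gt0.
move=> h; have := ler_wpM2l x0 h.
have -> : x * (y / x - 1) = y - x by field; exact: xn0.
nra.
Qed.

Lemma klterm_fin (x y : R) : (y = 0 -> x = 0) ->
  klterm x y = (if y == 0 then 0 else x * ln (x / y) - x + y)%:E.
Proof.
move=> h; rewrite /klterm; case: eqP => // y0.
by rewrite (h y0) eqxx.
Qed.

Lemma frob_ge0 n m (C P : 'M[R]_(n, m)) : mx_nonneg C -> mx_nonneg P -> 0 <= frob C P.
Proof.
move=> C0 P0; apply: sumr_ge0 => i _; apply: sumr_ge0 => j _; exact: mulr_ge0.
Qed.

Lemma sum_rows n m (P : 'M[R]_(n, m)) : \sum_i rowsum P i = \sum_j colsum P j.
Proof. by rewrite /rowsum /colsum exchange_big. Qed.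
End KLs.
Arguments klterm_ge0 {R x y}.
Arguments klterm_fin {R x y}.
Arguments frob_ge0 {R n m C P}.
Arguments sum_rows {R n m}.

Theorem proposition6 :
  (forall (R : realType) (n m : nat) (C : 'M[R]_(n, m)) (a : 'I_n -> R)
          (b : 'I_m -> R) (tau : R) (r : nat),
      mx_nonneg C -> (forall i, 0 <= a i) -> (exists i, 0 < a i) ->
      (forall j, 0 < b j) -> 0 < tau ->
      (2 <= r)%N -> (r <= minn n m)%N ->
      (`| SRW_r C a b tau r - SRW C a b tau | <=
         ((\sum_(j < m) b j) * (mxmax C - mxmin C)
            * ln ((minn n m)%:R / (r.-1)%:R))%:E)%E)
  /\
  (forall (R : realType) (n m : nat) (C : 'M[R]_(n, m)) (a : 'I_n -> R)
          (b : 'I_m -> R) (r : nat),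
      mx_nonneg C -> in_simplex a -> in_simplex b ->
      (2 <= r)%N -> (r <= minn n m)%N ->
      (`| W_r C a b r - W C a b | <=
         ((mxmax C - mxmin C) * ln ((minn n m)%:R / (r.-1)%:R))%:E)%E).
Proof.
split.
- move=> R n m C a b tau r C0 a0 [i0 ai0] b0 tau0 r2 rN.
  have mpos : (0 < m)%N by move: (leq_trans r2 rN); rewrite leq_min => /andP[_ /ltnW].
  set j0 := Ordinal mpos.
  have lohi : mxmin C <= mxmax C.
    by have /andP[h1 h2] := mx_bounds C i0 j0; apply: le_trans h2.
  rewrite /SRW_r /SRW; apply: final_gap.
  + by move=> P [h1 [h2 _]].
  + move=> P [P0 _]; rewrite /SRobj; apply: adde_ge0.
      by rewrite lee_fin; exact: frob_ge0.
    apply: mule_ge0; first by rewrite lee_fin ltW.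
    apply: sume_ge0 => i _; apply: klterm_ge0 => //.
    by apply: sumr_ge0 => j _; exact: P0.
  + set Sa := \sum_i a i.
    have Sap : 0 < Sa.
      rewrite /Sa (bigD1 i0) //=.
      have : 0 <= \sum_(i < n | i != i0) a i by apply: sumr_ge0 => i _.
      lra.
    set P1 := \matrix_(i < n, j < m) (a i * b j / Sa).
    have hk : forall i, klterm (rowsum P1 i) (a i) =
      (if a i == 0 then 0 else rowsum P1 i * ln (rowsum P1 i / a i) - rowsum P1 i + a i)%:E.
      move=> i; apply: klterm_fin => ai; rewrite /rowsum; apply: big1 => j _.
      by rewrite mxE ai !mul0r.
    exists P1; split.
      split.
        move=> i j; rewrite mxE; apply: divr_ge0; last exact: ltW.
        by apply: mulr_ge0 => //; exact: ltW.
      move=> j; rewrite /colsum; under eq_bigr => i _ do rewrite mxE.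
      rewrite -!mulr_suml -/Sa; field; lra.
    rewrite /SRobj /KL.
    under eq_bigr => i _ do rewrite hk.
    by rewrite sumEFin -EFinM -EFinD ltry.
  + move=> P [P0 Pc].
    have [Q [Q0 [Qr [Qc [Qk Qf]]]]] :=
      core3 P0 (fun i j => mx_bounds C i j) lohi r2 rN.
    exists Q; split.
      split => //; split => //; move=> j; rewrite Qc; exact: Pc.
    rewrite /SRobj.
    have -> : KL (rowsum Q) a = KL (rowsum P) a.
      by apply: eq_bigr => i _; rewrite Qr.
    rewrite addeAC -EFinD leeD2r // lee_fin.
    move: Qf; rewrite sum_rows.
    have -> : \sum_j colsum P j = \sum_j b j by apply: eq_bigr => j _; exact: Pc.
    by [].
- move=> R n m C a b r C0 [a0 a1] [b0 b1] r2 rN.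
  have mpos : (0 < m)%N by move: (leq_trans r2 rN); rewrite leq_min => /andP[_ /ltnW].
  have npos : (0 < n)%N by move: (leq_trans r2 rN); rewrite leq_min => /andP[/ltnW h _].
  set j0 := Ordinal mpos; set i0 := Ordinal npos.
  have lohi : mxmin C <= mxmax C.
    by have /andP[h1 h2] := mx_bounds C i0 j0; apply: le_trans h2.
  rewrite /W_r /W.
  apply: (@final_gap R _ (Pi_ab a b) _ (fun P => (frob C P)%:E)).
  + by move=> P [h _].
  + by move=> P [P0 _]; rewrite lee_fin; exact: frob_ge0.
  + exists (\matrix_(i < n, j < m) (a i * b j)); split; last exact: ltry.
    split; first by move=> i j; rewrite mxE; exact: mulr_ge0.
    split.
      move=> i; rewrite /rowsum; under eq_bigr => j _ do rewrite mxE.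
      by rewrite -mulr_sumr b1 mulr1.
    move=> j; rewrite /colsum; under eq_bigr => i _ do rewrite mxE.
    by rewrite -mulr_suml a1 mul1r.
  + move=> P [P0 [Pr Pc]].
    have [Q [Q0 [Qr [Qc [Qk Qf]]]]] :=
      core3 P0 (fun i j => mx_bounds C i j) lohi r2 rN.
    have PiQ : Pi_ab a b Q.
      split; first exact: Q0.
      split; [move=> i; rewrite Qr; exact: Pr | move=> j; rewrite Qc; exact: Pc].
    exists Q; split; first by split.
    rewrite -EFinD lee_fin.
    move: Qf; have -> : \sum_i rowsum P i = 1.
      by rewrite -a1; apply: eq_bigr => i _; exact: Pr.
    by rewrite mul1r.
Qed.
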